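(* Let $S$ be a list of sequences (indexed from $0$), and let $\rho(S[i],S[j])$ denote the length of the maximal common prefix of the sequences at indices $i$ and $j$. Define the overlap of $S[j]$ with respect to $S$ as $\mathcal{O}_S(j) := \max_{i<j} \rho(S[i],S[j])$ and the overlap of $S$ as $\mathcal{O}(S) := \sum_{j>0} \mathcal{O}_S(j)$. Let $L$ be the lexicographically ordered permutation of $S$. Then \[ \mathcal{O}(S) = \mathcal{O}(L) = \sum_{j>0} \rho(L[j-1],L[j]). \]
   Context: Setting: batch processing of shortest path queries in a road network. For each query, shortcut chains (sequences of vertices in a shortcut graph, oriented from the hub vertex to a query endpoint) are computed and then unpacked into paths; when unpacking a chain, the unpacked common prefix with a previously unpacked chain can be copied instead of recomputed. The overlap $\mathcal{O}(S)$ measures the amount of unpacking work saved for a given processing order of the list of chains $S$. *)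

(* Defs.v *)
From mathcomp Require Import all_boot all_order.
Set Implicit Arguments. Unset Strict Implicit. Unset Printing Implicit Defensive.
Import Order.TTheory.
Local Open Scope order_scope.

Fixpoint rho {T : eqType} (s t : seq T) : nat :=
  match s, t with
  | x :: s', y :: t' => if x == y then (rho s' t').+1 else 0%N
  | _, _ => 0%N
  end.

Fixpoint lexle {d : Order.disp_t} {T : orderType d} (s t : seq T) : bool :=
  match s, t with
  | [::], _ => true
  | _ :: _, [::] => false
  | x :: s', y :: t' => (x < y) || ((x == y) && lexle s' t')
  end.

Definition overlap_at {T : eqType} (S : seq (seq T)) (j : nat) : nat :=
  \max_(i < j) rho (nth [::] S i) (nth [::] S j).

Definition overlap {T : eqType} (S : seq (seq T)) : nat :=
  \sum_(1 <= j < size S) overlap_at S j.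

(* Main.v *)
Require Import Defs.
From mathcomp Require Import all_boot all_order zify.
Set Warnings "-notation-overridden".
Import Order.TTheory.

Lemma rho_sym {T : eqType} (a b : seq T) : rho a b = rho b a.
Proof. by elim: a b => [|x a IH] [|y b] //=; rewrite eq_sym IH. Qed.

Lemma rho_ultra {T : eqType} (a b c : seq T) : minn (rho a b) (rho b c) <= rho a c.
Proof.
elim: a b c => [|x a IH] [|y b] [|z c] //=; rewrite ?minn0 ?min0n //.
have := IH b c; case: (x =P y) => [exy|nxy]; last by rewrite min0n.
subst y; case: (x =P z) => [exz|nxz]; last by rewrite minn0.
by subst z; lia.
Qed.

Lemma lexle_trans {d} {T : orderType d} (a b c : seq T) :
  lexle a b -> lexle b c -> lexle a c.
Proof.
elim: a b c => [|x a IH] [|y b] [|z c] //=.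
case/orP=> [lxy|/andP[/eqP-> ab]]; case/orP=> [lyz|/andP[/eqP<- bc]].
- by rewrite (lt_trans lxy lyz).
- by rewrite lxy.
- by rewrite lyz.
- by rewrite eqxx (IH _ _ ab bc) orbT.
Qed.

Lemma lex_rho {d} {T : orderType d} (a b c : seq T) :
  lexle a b -> lexle b c -> rho a c <= rho b c.
Proof.
elim: a b c => [|x a IH] [|y b] [|z c] //=.
case/orP=> [lxy|/andP[/eqP-> ab]]; case/orP=> [lyz|/andP[/eqP<- bc]].
- by rewrite (lt_eqF (lt_trans lxy lyz)).
- by rewrite (lt_eqF lxy).
- by rewrite (lt_eqF lyz).
- by rewrite eqxx ltnS IH.
Qed.
Definition M {T : eqType} (S : seq (seq T)) x := \max_(y <- S) rho y x.

Lemma overlap_rcons {T : eqType} (S : seq (seq T)) x :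
  overlap (rcons S x) = overlap S + M S x.
Proof.
rewrite /overlap size_rcons.
have [S0|Sp] := posnP (size S).
  by rewrite (size0nil S0) /M big_nil !big_geq.
rewrite big_nat_recr //= addnC [in RHS]addnC; congr (_ + _).
  rewrite /overlap_at /M nth_rcons ltnn eqxx (big_nth [::]) big_mkord.
  by apply: eq_bigr => i _; rewrite nth_rcons ltn_ord.
apply: eq_big_nat => j /andP[_ jS]; rewrite /overlap_at nth_rcons jS.
by apply: eq_bigr => i _; rewrite nth_rcons (ltn_trans (ltn_ord i) jS).
Qed.

Lemma overlap_suffix {T : eqType} (P Q B : seq (seq T)) :
  perm_eq P Q -> overlap P = overlap Q -> overlap (P ++ B) = overlap (Q ++ B).
Proof.
move=> pe eo; elim/last_ind: B => [|B z IH]; first by rewrite !cats0.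
rewrite -!rcons_cat !overlap_rcons IH; congr (_ + _).
by apply: perm_big; rewrite perm_cat2r.
Qed.

Lemma M_rcons {T : eqType} (S : seq (seq T)) y x : M (rcons S y) x = maxn (M S x) (rho y x).
Proof. by rewrite /M -cats1 big_cat big_seq1. Qed.


Lemma M_ultra {T : eqType} (S : seq (seq T)) x y : minn (M S y) (rho y x) <= M S x.
Proof.
rewrite /M; elim: S => [|z S IH]; first by rewrite !big_nil min0n.
rewrite !big_cons; have := rho_ultra z y x; lia.
Qed.

Lemma overlap_swap {T : eqType} (A : seq (seq T)) x y :
  overlap (rcons (rcons A x) y) = overlap (rcons (rcons A y) x).
Proof.
rewrite !overlap_rcons !M_rcons; move: (M_ultra A x y) (M_ultra A y x).
rewrite (rho_sym y x); lia.
Qed.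

Lemma overlap_move {T : eqType} (S2 S1 : seq (seq T)) x :
  overlap (S1 ++ x :: S2) = overlap (rcons (S1 ++ S2) x).
Proof.
elim: S2 S1 => [|y S2 IH] S1; first by rewrite cats1 cats0.
have -> : S1 ++ [:: x, y & S2] = rcons (rcons S1 x) y ++ S2 by rewrite -!cats1 -!catA.
rewrite (@overlap_suffix _ _ (rcons (rcons S1 y) x)); last exact: overlap_swap.
  by rewrite cat_rcons IH cat_rcons.
by rewrite -!cats1 -!catA perm_cat2l perm_catC.
Qed.

Lemma perm_overlap {T : eqType} (L S : seq (seq T)) :
  perm_eq L S -> overlap L = overlap S.
Proof.
elim/last_ind: L S => [|L x IH] S pLS.
  by move: pLS; rewrite perm_sym => /perm_nilP ->.
have xS : x \in S by rewrite -(perm_mem pLS) mem_rcons mem_head.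
case/splitPr: S / xS pLS => S1 S2 pLS.

have pL : perm_eq L (S1 ++ S2).
  rewrite -(perm_cons x); apply: (perm_trans (perm_trans _ pLS)).
    by rewrite perm_sym perm_rcons.
  by rewrite -cat1s perm_catCA.
rewrite overlap_move !overlap_rcons (IH _ pL); congr (_ + _).
exact: perm_big.
Qed.


Lemma sorted_overlap {d} {T : orderType d} (L : seq (seq T)) :
  sorted lexle L ->
  overlap L = (\sum_(1 <= j < size L) rho (nth [::] L j.-1) (nth [::] L j))%N.
Proof.
move=> sL.
have tr : transitive (@lexle d T) by move=> b a c; apply: lexle_trans.
have hom := sorted_ltn_nth tr [::] sL.
apply: eq_big_nat => j /andP[]; case: j => // k _ kL; rewrite /overlap_at /=.
apply/eqP; rewrite eqn_leq; apply/andP; split.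
  apply/bigmax_leqP => i _.
  have [->|ne] := eqVneq (nat_of_ord i) k; first by [].
  have ij : i < k by move: (ltn_ord i) ne; lia.
  have P1 : k \in [pred n | n < size L] by rewrite inE /=; exact: ltnW.
  have P2 : k.+1 \in [pred n | n < size L] by [].
  have P0 : nat_of_ord i \in [pred n | n < size L] by rewrite inE /=; exact: ltn_trans (ltn_ord i) kL.
  apply: lex_rho; first exact: hom.
  by apply: hom => //; lia.
have i0 : k < k.+1 by [].
by rewrite (bigD1 ord_max) //= leq_maxl.
Qed.

Theorem theorem8p1 (d : Order.disp_t) (T : orderType d) (S L : seq (seq T)) :
  perm_eq L S -> sorted lexle L ->
  overlap S = overlap L /\
  overlap L = (\sum_(1 <= j < size L) rho (nth [::] L j.-1) (nth [::] L j))%N.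
Proof.
move=> pLS sL; split; first by symmetry; apply: perm_overlap.
exact: sorted_overlap.
Qed.
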